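(* For $\phi\in L^\infty$, the slant H-Toeplitz operator $V_\phi$ is self-adjoint if and only if $\phi=0$.
   Context: $L^2=L^2(\mathbb{T})$ with orthonormal basis $e_n(z)=z^n$, $n\in\mathbb{Z}$; $H^2$ is the closed span of $\{e_n\}_{n\ge0}$, $P:L^2\to H^2$ the orthogonal projection, $M_\phi$ multiplication by $\phi$. $W:L^2\to L^2$: $We_n=e_{n/2}$ for $n$ even, $0$ for $n$ odd. $K:H^2\to L^2$: $Ke_{2n}=e_n$, $Ke_{2n+1}=e_{-n-1}$ ($n\ge0$). The slant H-Toeplitz operator is $V_\phi=WPM_\phi K:H^2\to H^2$. *)

(* Defs.v *)
From HB Require Import structures.
From mathcomp Require Import all_boot all_order all_algebra.
From mathcomp Require Import all_classical all_reals all_analysis.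
From mathcomp Require Import complex.
Set Implicit Arguments. Unset Strict Implicit. Unset Printing Implicit Defensive.
Import Order.TTheory GRing.Theory Num.Theory.
Import numFieldNormedType.Exports.
Local Open Scope classical_set_scope.
Local Open Scope ring_scope.

(* The circle T is parametrised by t in [0, 2pi] (z = e^{it}); a symbol  *)
(* phi in L^oo(T) is a function t |-> phi(e^{it}) : R -> R[i].            *)
(* L^2(T) is identified with l^2(Z) through the orthonormal basis e_n:    *)
(* an element is its sequence of coordinates c : int -> R[i].             *)

Section SlantHToeplitz.
Variable R : realType.
Local Notation C := R[i].
Local Notation leb := (@lebesgue_measure R).

Definition reC (z : C) : R := @complex.Re R z.
Definition imC (z : C) : R := @complex.Im R z.

Definition cmod (z : C) : R := Num.sqrt (reC z ^+ 2 + imC z ^+ 2).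

Definition circ : set R := `[0%R, (2 * pi)%R].

Definition Linfty (phi : R -> C) : Prop :=
  measurable_fun circ (fun t => reC (phi t)) /\
  measurable_fun circ (fun t => imC (phi t)) /\
  exists M : R, {ae leb, forall t, circ t -> cmod (phi t) <= M}.

Definition ae_zero (phi : R -> C) : Prop :=
  {ae leb, forall t, circ t -> phi t = 0}.

(* n-th Fourier coefficient (1/2pi) int_0^{2pi} phi(e^{it}) e^{-int} dt *)
Definition fourier (phi : R -> C) (n : int) : C :=
  @Complex R
    ((2 * pi)^-1 * Rintegral leb circ
       (fun t => reC (phi t) * cos (n%:~R * t) + imC (phi t) * sin (n%:~R * t)))
    ((2 * pi)^-1 * Rintegral leb circ
       (fun t => imC (phi t) * cos (n%:~R * t) - reC (phi t) * sin (n%:~R * t))).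

Definition psumZ (f : int -> C) (N : nat) : C :=
  \sum_(i < (2 * N)%N) f (i%:Z - N%:Z).

Definition sumZ (f : int -> C) : C :=
  @Complex R (limn (fun N => reC (psumZ f N))) (limn (fun N => imC (psumZ f N))).

Definition inL2 (c : int -> C) : Prop :=
  cvgn (fun N => \sum_(i < (2 * N)%N) (cmod (c (i%:Z - N%:Z))) ^+ 2).

(* elements of H^2 : closed span of e_n, n >= 0 *)
Definition inH2 (c : int -> C) : Prop :=
  inL2 c /\ (forall n : int, n < 0 -> c n = 0).

Definition inner (c d : int -> C) : C := sumZ (fun n => c n * @conjc R (d n)).

Definition Pproj (c : int -> C) : int -> C := fun n => if 0 <= n then c n else 0.

(* M_phi : multiplication by phi, i.e. convolution with its Fourier coefficients *)
Definition Mult (phi : R -> C) (c : int -> C) : int -> C :=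
  fun n => sumZ (fun k => fourier phi (n - k) * c k).

(* W e_n = e_{n/2} for n even, 0 for n odd *)
Definition Wop (c : int -> C) : int -> C := fun m => c (2 * m).

(* K e_{2n} = e_n,  K e_{2n+1} = e_{-n-1}  (n >= 0) *)
Definition Kop (c : int -> C) : int -> C :=
  fun m => if 0 <= m then c (2 * m) else c (- (2 * m) - 1).

Definition Vop (phi : R -> C) (c : int -> C) : int -> C :=
  Wop (Pproj (Mult phi (Kop c))).

Definition selfadjoint_H2 (T : (int -> C) -> (int -> C)) : Prop :=
  forall f g, inH2 f -> inH2 g -> inner (T f) g = inner f (T g).

End SlantHToeplitz.

(* Main.v *)
Require Import Defs.
From HB Require Import structures.
From mathcomp Require Import all_boot all_order all_algebra.
From mathcomp Require Import all_classical all_reals all_analysis.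
From mathcomp Require Import complex.
From mathcomp Require Import zify ring lra.
Set Implicit Arguments. Unset Strict Implicit. Unset Printing Implicit Defensive.
Import Order.TTheory GRing.Theory Num.Theory.
Import numFieldNormedType.Exports.
Local Open Scope classical_set_scope.
Local Open Scope ring_scope.
Local Notation measurable_EFinP := measurable_realfun.measurable_EFinP.
Local Notation measurable_funM := measurable_realfun.measurable_funM.
Local Notation measurable_funD := measurable_realfun.measurable_funD.
Local Notation measurable_funB := measurable_realfun.measurable_funB.
Local Notation continuous_measurable_fun := measurable_realfun.continuous_measurable_fun.

Section A.
Variable R : realType.
Local Notation C := R[i].

Lemma sum_single (V : zmodType) (g : int -> V) (j : int) (N : nat) :
  (forall n, n != j -> g n = 0) -> (absz j < N)%N ->
  \sum_(i < (2 * N)%N) g (i%:Z - N%:Z) = g j.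
Proof.
move=> g0 hN.
have hk : (absz (j + N%:Z)%R < 2 * N)%N by lia.
rewrite (bigD1 (Ordinal hk)) //= big1 ?addr0.
  congr g; lia.
move=> i /eqP hi; apply: g0; apply/eqP => e; apply: hi.
apply: val_inj => /=; lia.
Qed.

Lemma sumZ_single (f : int -> C) (j : int) :
  (forall n, n != j -> f n = 0) -> sumZ f = f j.
Proof.
move=> f0; rewrite /sumZ.
have ev : \forall N \near \oo, psumZ f N = f j.
  near=> N; apply: sum_single => //.
  near: N; exists (absz j).+1 => // n /=; lia.
have -> : limn (fun N => reC (psumZ f N)) = reC (f j).
  by apply: lim_near_cst => //; apply: filterS ev => N ->.
have -> : limn (fun N => imC (psumZ f N)) = imC (f j).
  by apply: lim_near_cst => //; apply: filterS ev => N ->.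
by case: (f j).
Unshelve. all: by end_near.
Qed.

Lemma sumZ0 : sumZ (fun _ : int => (0 : C)) = 0.
Proof. by rewrite (@sumZ_single _ 0). Qed.

Definition ee (j : int) : int -> C := fun m => if m == j then 1 else 0.

Lemma cmod0 : cmod (0 : C) = 0.
Proof. by rewrite /cmod /reC /imC /= expr0n /= addr0 sqrtr0. Qed.

Lemma inH2_ee (p : nat) : inH2 (ee p%:Z).
Proof.
split; last by move=> n n0; rewrite /ee; case: eqP => // e; lia.
rewrite /inL2.
apply: (@is_cvg_near_cst _ _ ((cmod (ee p%:Z p%:Z)) ^+ 2)).
near=> N; apply: (@sum_single R^o (fun n => cmod (ee p%:Z n) ^+ 2)).
  by move=> n /negbTE; rewrite /ee => ->; rewrite cmod0 expr0n.
near: N; exists p.+1 => // n /=; lia.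
Unshelve. all: by end_near.
Qed.

Definition kidx (i : nat) : int := if odd i then - (i./2)%:Z - 1 else (i./2)%:Z.

Lemma Kop_ee (i : nat) : Kop (ee i%:Z) = ee (kidx i).
Proof.
apply/funext => m; rewrite /Kop /ee /kidx.
have hi := odd_double_half i.
case: ifP => m0; case: (odd i) hi => /= hi.
- case: eqP => e1; case: eqP => e2 //; lia.
- case: eqP => e1; case: eqP => e2 //; lia.
- case: eqP => e1; case: eqP => e2 //; lia.
- case: eqP => e1; case: eqP => e2 //; lia.
Qed.

Lemma Mult_ee (phi : R -> C) (k : int) n : Mult phi (ee k) n = fourier phi (n - k).
Proof.
rewrite /Mult (@sumZ_single _ k); first by rewrite /ee eqxx mulr1.
by move=> l /negbTE; rewrite /ee => ->; rewrite mulr0.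
Qed.

Lemma Vop_ee (phi : R -> C) (i : nat) (j : int) : 0 <= j ->
  Vop phi (ee i%:Z) j = fourier phi (2 * j - kidx i).
Proof.
move=> j0; rewrite /Vop /Wop /Pproj Kop_ee.
have -> : (0 <= 2 * j) = true by apply/idP; lia.
by rewrite Mult_ee.
Qed.

Lemma inner_ee_r (c : int -> C) (j : int) : inner c (ee j) = c j.
Proof.
rewrite /inner (@sumZ_single _ j); first by rewrite /ee eqxx conjc1 mulr1.
by move=> n /negbTE; rewrite /ee => ->; rewrite conjc0 mulr0.
Qed.

Lemma inner_ee_l (c : int -> C) (j : int) : inner (ee j) c = (c j)^*.
Proof.
rewrite /inner (@sumZ_single _ j); first by rewrite /ee eqxx mul1r.
by move=> n /negbTE; rewrite /ee => ->; rewrite mul0r.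
Qed.

Lemma selfadj_rel (phi : R -> C) (i j : nat) : selfadjoint_H2 (Vop phi) ->
  fourier phi (2 * j%:Z - kidx i) = (fourier phi (2 * i%:Z - kidx j))^*.
Proof.
move=> sa; have := sa _ _ (inH2_ee i) (inH2_ee j).
by rewrite inner_ee_r inner_ee_l !Vop_ee.
Qed.

End A.

Section B.
Variable R : realType.
Local Notation leb := (@lebesgue_measure R).
Local Notation D := (@circ R).

Lemma isd_derivable (f : R -> R) x v (df : R) : is_derive x v f df -> derivable f x v.
Proof. by move=> H; exact: (@ex_derive _ _ _ _ _ _ _ H). Qed.
Lemma isd_val (f : R -> R) x v (df : R) : is_derive x v f df -> 'D_v f x = df.
Proof. by move=> H; exact: (@derive_val _ _ _ _ _ _ _ H). Qed.

Lemma der_mul (k x : R) : is_derive x 1 (fun t : R => k * t) k.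
Proof.
have := @is_deriveZ R R R^o id k x 1 1 _.
rewrite /GRing.scale /= mulr1. apply.
Qed.

Lemma der_sinM (k x : R) : derivable (fun t => sin (k*t)) x 1 /\
   (fun t => sin (k*t))^`()%classic x = k * cos (k*x).
Proof.
have d1 : derivable (fun t : R => k * t) x 1 by exact: isd_derivable (der_mul k x).
have d2 : derivable (@sin R) (k * x) 1 by exact: isd_derivable (is_derive_sin _).
split.
  by apply/derivable1_diffP; apply: (@differentiable_comp _ _ _ _ (fun t : R => k * t) sin); apply/derivable1_diffP.
have := @derive1_comp R (fun t : R => k * t) sin x d1 d2.
rewrite /comp => ->.
rewrite derive1E (isd_val (is_derive_sin _)) derive1E (isd_val (der_mul k x)).
by rewrite mulrC.
Qed.

Lemma cmul (k : R) : continuous (fun t : R => k * t).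
Proof. move=> x; apply: cvgMr; exact: cvg_id. Qed.
Lemma ccos (k : R) : continuous (fun t : R => cos (k * t)).
Proof. move=> x; apply: (@continuous_comp _ _ _ (fun t : R => k * t) cos); [exact: cmul | exact: continuous_cos]. Qed.
Lemma csin (k : R) : continuous (fun t : R => sin (k * t)).
Proof. move=> x; apply: (@continuous_comp _ _ _ (fun t : R => k * t) sin); [exact: cmul | exact: continuous_sin]. Qed.

Lemma mD : measurable D.
Proof. exact: measurable_itv. Qed.
Lemma muD : leb D = (2 * pi)%:E.
Proof. by rewrite /circ lebesgue_measure_itv /= lte_fin mulr_gt0 ?pi_gt0 //= oppr0 adde0. Qed.
Lemma muD_fin : (leb D < +oo)%E.
Proof. by rewrite muD ltry. Qed.

Lemma aeS (P Q : R -> Prop) : (forall t, P t -> Q t) ->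
  {ae leb, forall t, P t} -> {ae leb, forall t, Q t}.
Proof. move=> PQ; apply: filterS => //; exact: (ae_filter_ringOfSetsType leb). Qed.
Lemma aeS2 (P Q S : R -> Prop) : (forall t, P t -> Q t -> S t) ->
  {ae leb, forall t, P t} -> {ae leb, forall t, Q t} -> {ae leb, forall t, S t}.
Proof. move=> PQ; apply: filterS2 => //; exact: (ae_filter_ringOfSetsType leb). Qed.

Definition good (f : R -> R) := measurable_fun D f /\
  exists M : R, {ae leb, forall t, D t -> `|f t| <= M}.

Lemma good_int f : good f -> leb.-integrable D (EFin \o f).
Proof.
move=> [mf [M hM]]; apply/integrableP; split; first exact/measurable_EFinP.
apply: (@le_lt_trans _ _ ((`|M|)%:E * leb D)%E).
  apply: integral_le_bound => //; first exact: mD.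
    exact/measurable_EFinP.
  apply: aeS hM => t h Dt /=; rewrite lee_fin.
  exact: le_trans (h Dt) (ler_norm M).
by rewrite muD -EFinM ltry.
Qed.

Lemma good_cont f M : continuous f -> (forall t, `|f t| <= M) -> good f.
Proof.
move=> cf hM; split; last by exists M; apply: aeW => t _.
apply: measurable_funS (measurable_realfun.continuous_measurable_fun cf) => //.
Qed.

Lemma good_cos (k : R) : good (fun t => cos (k * t)).
Proof. by apply: (good_cont (M := 1)); [exact: ccos | move=> t; exact: cos_max]. Qed.
Lemma good_sin (k : R) : good (fun t => sin (k * t)).
Proof. by apply: (good_cont (M := 1)); [exact: csin | move=> t; exact: sin_max]. Qed.

Lemma good_M f g : good f -> good g -> good (fun t => f t * g t).
Proof.
move=> [mf [M1 h1]] [mg [M2 h2]]; split.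
  exact: measurable_realfun.measurable_funM.
exists (`|M1| * `|M2|); apply: aeS2 h1 h2 => t a b Dt.
rewrite normrM; apply: ler_pM => //.
  exact: le_trans (a Dt) (ler_norm _).
exact: le_trans (b Dt) (ler_norm _).
Qed.

Lemma good_D f g : good f -> good g -> good (fun t => f t + g t).
Proof.
move=> [mf [M1 h1]] [mg [M2 h2]]; split.
  exact: measurable_realfun.measurable_funD.
exists (M1 + M2); apply: aeS2 h1 h2 => t a b Dt.
exact: le_trans (ler_normD _ _) (lerD (a Dt) (b Dt)).
Qed.

Lemma good_cst (c : R) : good (fun _ => c).
Proof. by split; [exact: measurable_cst | exists `|c|; apply: aeW]. Qed.

Lemma good_Z (c : R) f : good f -> good (fun t => c * f t).
Proof. by move=> gf; apply: good_M => //; exact: good_cst. Qed.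

Lemma good_B f g : good f -> good g -> good (fun t => f t - g t).
Proof.
move=> gf gg; have := good_D gf (good_Z (-1) gg).
have -> : (fun t => f t + -1 * g t) = (fun t => f t - g t).
  by apply/funext => t; rewrite mulN1r.
done.
Qed.

Lemma Rint_ae0 (f : R -> R) : measurable_fun D f -> {ae leb, forall t, D t -> f t = 0} ->
  Rintegral leb D f = 0.
Proof.
move=> mf h; rewrite /Rintegral.
rewrite (@ae_eq_integral _ _ _ _ _ (fun _ => 0%:E)) //=.
- by rewrite integral0.
- exact: mD.
- exact/measurable_EFinP.
- by apply: aeS h => t ht Dt; rewrite /= ht.
Qed.

Lemma RintD f g : good f -> good g ->
  Rintegral leb D (fun t => f t + g t) = Rintegral leb D f + Rintegral leb D g.
Proof. by move=> gf gg; apply: RintegralD; [exact: mD|exact: good_int..]. Qed.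
Lemma RintB f g : good f -> good g ->
  Rintegral leb D (fun t => f t - g t) = Rintegral leb D f - Rintegral leb D g.
Proof. by move=> gf gg; apply: RintegralB; [exact: mD|exact: good_int..]. Qed.
Lemma RintZ c f : good f ->
  Rintegral leb D (fun t => c * f t) = c * Rintegral leb D f.
Proof. by move=> gf; apply: RintegralZl; [exact: mD|exact: good_int]. Qed.

Lemma sin_nat2pi (n : nat) : sin (n%:R * (2 * pi)) = 0 :> R.
Proof.
elim: n => [|n IH]; first by rewrite mul0r sin0.
rewrite -addn1 natrD mulrDl mul1r.
have h := @sinD2pi R (n%:R * (2 * pi)); rewrite -[pi *+ 2]mulr_natl in h.
by rewrite h.
Qed.

Lemma int_kcos (n : nat) : Rintegral leb D (fun t => n%:R * cos (n%:R * t)) = 0.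
Proof.
set k : R := n%:R.
rewrite /Rintegral (@continuous_FTC2 _ (fun t => k * cos (k*t)) (fun t => sin (k*t)) 0 (2*pi)).
- by rewrite mulr0 sin0 /k sin_nat2pi /= subrr.
- by rewrite mulr_gt0 ?pi_gt0.
- apply: continuous_in_subspaceT => x _.
  apply: cvgMr; exact: ccos.
- split.
  + move=> x _; exact: (der_sinM k x).1.
  + apply: cvg_at_right_filter; exact: csin.
  + apply: cvg_at_left_filter; exact: csin.
- move=> x _; exact: (der_sinM k x).2.
Qed.

Lemma int_cos_nat (n : nat) : Rintegral leb D (fun t => cos (n.+1%:R * t)) = 0.
Proof.
have := int_kcos n.+1; rewrite RintZ; last exact: good_cos.
by move/eqP; rewrite mulf_eq0 pnatr_eq0 /= => /eqP.
Qed.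

Lemma int_cos_int (k : int) : Rintegral leb D (fun t => cos (k%:~R * t)) =
  if k == 0 then 2 * pi else 0.
Proof.
case: k => [[|n]|n] /=.
- under eq_Rintegral do rewrite mul0r cos0.
  rewrite (@Rintegral_cst _ _ _ leb D mD 1) mul1r.
  by have h : fine (leb D) = 2 * pi by rewrite muD.

- exact: int_cos_nat.
- rewrite -(int_cos_nat n); apply: eq_Rintegral => t _.
  by rewrite NegzE mulrNz mulNr cosN.
Qed.

End B.

Section C.
Variable R : realType.
Local Notation leb := (@lebesgue_measure R).
Local Notation D := (@circ R).
Local Notation Rint f := (Rintegral leb D f).

Lemma sq_bounded_cvg0 (c : nat -> R) (K : R) :
  (forall N, \sum_(i < N) c i ^+ 2 <= K) -> c n @[n --> \oo] --> 0.
Proof.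
move=> hK.
have cs : cvgn (series (fun i => c i ^+ 2)).
  apply: nondecreasing_is_cvgn.
    move=> m n mn; rewrite /series /=.
    rewrite (big_cat_nat (leq0n m) mn) /= lerDl.
    by apply: sumr_ge0 => i _; exact: sqr_ge0.
  exists K => _ [N _ <-]; rewrite /series /= big_mkord; exact: hK.
have c2 := cvg_series_cvg_0 cs.
apply/cvgr0Pnorm_lt => e e0.
move/cvgr0Pnorm_lt : c2 => /(_ (e ^+ 2)) /(_ (exprn_gt0 2 e0)).
apply: filterS => n /=.
rewrite normrX => h.
by move: h; rewrite ltr_pXn2r // nnegrE ltW.
Qed.

Lemma good_sum (N : nat) (F : nat -> R -> R) : (forall i, good (F i)) ->
  good (fun t => \sum_(i < N) F i t).
Proof.
move=> gF; elim: N => [|N IH].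
  have -> : (fun t : R => \sum_(i < 0) F i t) = (fun _ => 0).
    by apply/funext => t; rewrite big_ord0.
  exact: good_cst.
have -> : (fun t => \sum_(i < N.+1) F i t) = (fun t => \sum_(i < N) F i t + F N t).
  by apply/funext => t; rewrite big_ord_recr.
exact: good_D.
Qed.

Lemma Rint_sum (N : nat) (F : nat -> R -> R) : (forall i, good (F i)) ->
  Rint (fun t => \sum_(i < N) F i t) = \sum_(i < N) Rint (F i).
Proof.
move=> gF; elim: N => [|N IH].
  rewrite big_ord0.
  under eq_Rintegral do rewrite big_ord0.
  by rewrite Rint_ae0 //; apply: aeW.
rewrite big_ord_recr /= -IH -RintD //; last exact: good_sum.
by apply: eq_Rintegral => t _; rewrite big_ord_recr.
Qed.

Lemma bessel (u : R -> R) (ph : nat -> R -> R) (N : nat) :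
  good u -> (forall i, good (ph i)) ->
  (forall i j, (i < N)%N -> (j < N)%N ->
     Rint (fun t => ph i t * ph j t) = if i == j then pi else 0) ->
  \sum_(i < N) (Rint (fun t => u t * ph i t)) ^+ 2 <= pi * Rint (fun t => u t * u t).
Proof.
move=> gu gph orth.
set c := fun i => Rint (fun t => u t * ph i t).
set T := fun t => \sum_(i < N) c i * ph i t.
have gT : good T by rewrite /T; apply: (@good_sum N (fun i t => c i * ph i t)) => i; exact: good_Z.
have gT2 : forall i, good (fun t => ph i t * T t) by move=> i; exact: good_M.
have uT : Rint (fun t => u t * T t) = \sum_(i < N) c i ^+ 2.
  rewrite /T.
  under eq_Rintegral do rewrite mulr_sumr.
  rewrite (@Rint_sum N (fun i t => u t * (c i * ph i t))); last by move=> i; apply: good_M => //; exact: good_Z.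
  apply: eq_bigr => i _.
  under eq_Rintegral do rewrite mulrCA.
  by rewrite RintZ ?expr2 //; exact: good_M.
have TT : Rint (fun t => T t * T t) = pi * \sum_(i < N) c i ^+ 2.
  rewrite {1}/T.
  under eq_Rintegral do rewrite mulr_suml.
  rewrite (@Rint_sum N (fun i t => c i * ph i t * T t)); last by move=> i; apply: good_M => //; exact: good_Z.
  rewrite mulr_sumr; apply: eq_bigr => i _.
  under eq_Rintegral do rewrite -mulrA.
  rewrite RintZ //.
  rewrite /T.
  under eq_Rintegral do rewrite mulr_sumr.
  rewrite (@Rint_sum N (fun j t => ph i t * (c j * ph j t))); last by move=> j; apply: good_M => //; exact: good_Z.
  rewrite (bigD1 i) //= big1 ?addr0.
    under eq_Rintegral do rewrite mulrCA.
    rewrite RintZ; last exact: good_M.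
    by rewrite orth // eqxx expr2; ring.
  move=> j /negbTE ji.
  under eq_Rintegral do rewrite mulrCA.
  rewrite RintZ; last exact: good_M.
  rewrite orth //; case: eqP => [e|_]; last by rewrite mulr0.
  by move: ji; rewrite (val_inj e) eqxx.
have pos : 0 <= Rint (fun t => (pi * u t - T t) * (pi * u t - T t)).
  by apply: Rintegral_ge0 => t _; rewrite -expr2 sqr_ge0.
have gpu : good (fun t => pi * u t) by exact: good_Z.
have e : Rint (fun t => (pi * u t - T t) * (pi * u t - T t)) =
   pi * pi * Rint (fun t => u t * u t) - 2 * pi * Rint (fun t => u t * T t)
   + Rint (fun t => T t * T t).
  have -> : (fun t => (pi * u t - T t) * (pi * u t - T t)) =
    (fun t => (pi * pi * (u t * u t) - 2 * pi * (u t * T t)) + T t * T t).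
    by apply/funext => t; ring.
  rewrite RintD; last 2 first.
  - by apply: good_B; apply: good_Z; apply: good_M.
  - exact: good_M.
  rewrite RintB; try by apply: good_Z; apply: good_M.
  by rewrite !RintZ //; apply: good_M.
move: pos; rewrite e uT TT => h.
have pi0 : 0 < (pi : R) by exact: pi_gt0.
rewrite -subr_ge0.
have : 0 <= pi * (pi * Rint (fun t => u t * u t) - \sum_(i < N) c i ^+ 2).
  set A := Rint (fun t => u t * u t); set S := \sum_(i < N) c i ^+ 2.
  have -> : pi * (pi * A - S) = pi * pi * A - 2 * pi * S + pi * S by ring.
  exact: h.
by rewrite pmulr_rge0.
Qed.

End C.

Section Dd.
Variable R : realType.
Local Notation leb := (@lebesgue_measure R).
Local Notation D := (@circ R).
Local Notation Rint f := (Rintegral leb D f).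

Lemma cos_prod (a b : R) : cos a * cos b = 2^-1 * (cos (a - b) + cos (a + b)).
Proof. by rewrite cosD cosD cosN sinN; field. Qed.
Lemma sin_prod (a b : R) : sin a * sin b = 2^-1 * (cos (a - b) - cos (a + b)).
Proof. by rewrite cosD cosD cosN sinN; field. Qed.

Lemma orth_aux (i j : nat) :
  Rint (fun t => cos ((i.+1%:Z - j.+1%:Z)%:~R * t)) = if i == j then 2 * pi else 0.
Proof.
rewrite int_cos_int; congr (if _ then _ else _).
by apply/eqP/eqP => h; lia.
Qed.

Lemma orth_aux2 (i j : nat) :
  Rint (fun t => cos ((i.+1%:Z + j.+1%:Z)%:~R * t)) = 0.
Proof. by rewrite int_cos_int; case: eqP => // h; lia. Qed.

Lemma orth_cos (i j : nat) :
  Rint (fun t => cos (i.+1%:R * t) * cos (j.+1%:R * t)) = if i == j then pi else 0.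
Proof.
have -> : (fun t : R => cos (i.+1%:R * t) * cos (j.+1%:R * t)) =
  (fun t : R => 2^-1 * (cos ((i.+1%:Z - j.+1%:Z)%:~R * t) + cos ((i.+1%:Z + j.+1%:Z)%:~R * t))).
  apply/funext => t; rewrite cos_prod; congr (_ * (cos _ + cos _)).
    by rewrite intrB mulrBl.
  by rewrite intrD mulrDl.
rewrite RintZ; last by apply: good_D; exact: good_cos.
rewrite RintD; try exact: good_cos.
rewrite orth_aux orth_aux2 addr0; case: eqP => _; last by rewrite mulr0.
by field.
Qed.

Lemma orth_sin (i j : nat) :
  Rint (fun t => sin (i.+1%:R * t) * sin (j.+1%:R * t)) = if i == j then pi else 0.
Proof.
have -> : (fun t : R => sin (i.+1%:R * t) * sin (j.+1%:R * t)) =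
  (fun t : R => 2^-1 * (cos ((i.+1%:Z - j.+1%:Z)%:~R * t) - cos ((i.+1%:Z + j.+1%:Z)%:~R * t))).
  apply/funext => t; rewrite sin_prod; congr (_ * (cos _ - cos _)).
    by rewrite intrB mulrBl.
  by rewrite intrD mulrDl.
rewrite RintZ; last by apply: good_B; exact: good_cos.
rewrite RintB; try exact: good_cos.
rewrite orth_aux orth_aux2 subr0; case: eqP => _; last by rewrite mulr0.
by field.
Qed.

Lemma coef_cos_cvg0 (u : R -> R) : good u ->
  (fun n : nat => Rint (fun t => u t * cos (n%:R * t))) n @[n --> \oo] --> 0.
Proof.
move=> gu; rewrite -cvg_shiftS /=.
apply: (@sq_bounded_cvg0 _ _ (pi * Rint (fun t => u t * u t))) => N.
apply: (@bessel _ u (fun i t => cos (i.+1%:R * t))) => //.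
  by move=> i; exact: good_cos.
by move=> i j _ _; exact: orth_cos.
Qed.

Lemma coef_sin_cvg0 (u : R -> R) : good u ->
  (fun n : nat => Rint (fun t => u t * sin (n%:R * t))) n @[n --> \oo] --> 0.
Proof.
move=> gu; rewrite -cvg_shiftS /=.
apply: (@sq_bounded_cvg0 _ _ (pi * Rint (fun t => u t * u t))) => N.
apply: (@bessel _ u (fun i t => sin (i.+1%:R * t))) => //.
  by move=> i; exact: good_sin.
by move=> i j _ _; exact: orth_sin.
Qed.

End Dd.

Section E.
Variable R : realType.
Local Notation C := R[i].
Local Notation leb := (@lebesgue_measure R).
Local Notation D := (@circ R).
Local Notation Rint f := (Rintegral leb D f).

Lemma kidx_odd p : kidx (p.*2.+1) = - p%:Z - 1.
Proof. by rewrite /kidx /= odd_double /= uphalf_double. Qed.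
Lemma kidx_even p : kidx (p.*2) = p%:Z.
Proof. by rewrite /kidx odd_double /= doubleK. Qed.

Lemma rel_pos (phi : R -> C) (p : nat) : selfadjoint_H2 (Vop phi) ->
  fourier phi (p.+1)%:Z = (fourier phi (4 * p + 2)%:Z)^*.
Proof.
move=> sa.
have e1 : (2 * (p.*2.+1)%:Z - kidx 0) = (4 * p + 2)%:Z by rewrite /kidx /=; lia.
have e2 : (2 * 0%:Z - kidx (p.*2.+1)) = p.+1%:Z by rewrite kidx_odd; lia.
by have := selfadj_rel 0 (p.*2.+1) sa; rewrite e1 e2 => ->; rewrite conjCK.
Qed.

Lemma rel_neg (phi : R -> C) (p : nat) : selfadjoint_H2 (Vop phi) ->
  fourier phi (- p%:Z) = (fourier phi (4 * p)%:Z)^*.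
Proof.
move=> sa.
have e1 : (2 * (p.*2)%:Z - kidx 0) = (4 * p)%:Z by rewrite /kidx /=; lia.
have e2 : (2 * 0%:Z - kidx (p.*2)) = - p%:Z by rewrite kidx_even; lia.
by have := selfadj_rel 0 (p.*2) sa; rewrite e1 e2 => ->; rewrite conjCK.
Qed.

Lemma rel_zero (phi : R -> C) : selfadjoint_H2 (Vop phi) ->
  fourier phi 0 = (fourier phi 9%:Z)^*.
Proof.
move=> sa.
have e1 : (2 * 1%:Z - kidx 4) = 0 by rewrite /kidx /=.
have e2 : (2 * 4%:Z - kidx 1) = 9%:Z by rewrite /kidx /=.
by have := selfadj_rel 4 1 sa; rewrite e1 e2.
Qed.

End E.

Section F.
Variable R : realType.
Local Notation C := R[i].
Local Notation leb := (@lebesgue_measure R).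
Local Notation D := (@circ R).
Local Notation Rint f := (Rintegral leb D f).

Lemma re_le_cmod (z : C) : `|reC z| <= cmod z.
Proof.
rewrite /cmod -sqrtr_sqr; apply: ler_wsqrtr.
by rewrite lerDl sqr_ge0.
Qed.
Lemma im_le_cmod (z : C) : `|imC z| <= cmod z.
Proof.
rewrite /cmod -sqrtr_sqr; apply: ler_wsqrtr.
by rewrite lerDr sqr_ge0.
Qed.

Lemma Linfty_good (phi : R -> C) : Linfty phi ->
  good (fun t => reC (phi t)) /\ good (fun t => imC (phi t)).
Proof.
move=> [mu [mv [M hM]]]; split; split => //; exists M; apply: aeS hM => t h Dt.
  exact: le_trans (re_le_cmod _) (h Dt).
exact: le_trans (im_le_cmod _) (h Dt).
Qed.

Lemma reC_conj (z : C) : reC (z^*) = reC z.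
Proof. by case: z. Qed.
Lemma imC_conj (z : C) : imC (z^*) = - imC z.
Proof. by case: z. Qed.

Lemma fourier_re (phi : R -> C) (n : int) : Linfty phi ->
  reC (fourier phi n) = (2 * pi)^-1 *
   (Rint (fun t => reC (phi t) * cos (n%:~R * t)) + Rint (fun t => imC (phi t) * sin (n%:~R * t))).
Proof.
move=> /Linfty_good [gu gv]; rewrite /fourier /reC /=.
by rewrite RintD //; apply: good_M => //; [exact: good_cos | exact: good_sin].
Qed.

Lemma fourier_im (phi : R -> C) (n : int) : Linfty phi ->
  imC (fourier phi n) = (2 * pi)^-1 *
   (Rint (fun t => imC (phi t) * cos (n%:~R * t)) - Rint (fun t => reC (phi t) * sin (n%:~R * t))).
Proof.
move=> /Linfty_good [gu gv]; rewrite /fourier /imC /=.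
by rewrite RintB //; apply: good_M => //; [exact: good_cos | exact: good_sin].
Qed.

Lemma fourier_re_cvg0 (phi : R -> C) : Linfty phi ->
  (fun n : nat => reC (fourier phi n%:Z)) n @[n --> \oo] --> 0.
Proof.
move=> hL; have [gu gv] := Linfty_good hL.
have -> : (fun n : nat => reC (fourier phi n%:Z)) = (fun n : nat => (2 * pi)^-1 *
   (Rint (fun t => reC (phi t) * cos (n%:R * t)) + Rint (fun t => imC (phi t) * sin (n%:R * t)))).
  by apply/funext => n; rewrite fourier_re.
rewrite -(mulr0 ((2 * pi)^-1)) -(addr0 0).
apply: cvgMr; apply: cvgD; [exact: coef_cos_cvg0 | exact: coef_sin_cvg0].
Qed.

Lemma fourier_im_cvg0 (phi : R -> C) : Linfty phi ->
  (fun n : nat => imC (fourier phi n%:Z)) n @[n --> \oo] --> 0.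
Proof.
move=> hL; have [gu gv] := Linfty_good hL.
have -> : (fun n : nat => imC (fourier phi n%:Z)) = (fun n : nat => (2 * pi)^-1 *
   (Rint (fun t => imC (phi t) * cos (n%:R * t)) - Rint (fun t => reC (phi t) * sin (n%:R * t)))).
  by apply/funext => n; rewrite fourier_im.
rewrite -(mulr0 ((2 * pi)^-1)) -(subr0 0).
apply: cvgMr; apply: cvgB; [exact: coef_cos_cvg0 | exact: coef_sin_cvg0].
Qed.

Lemma chain0 (a : nat -> R) (g : nat -> nat) :
  a n @[n --> \oo] --> 0 -> (forall p, (p < g p)%N) ->
  (forall p, `|a p| = `|a (g p)|) -> forall p, a p = 0.
Proof.
move=> ha gp ag p; apply/eqP; apply: contraT => ne.
have e0 : 0 < `|a p| by rewrite normr_gt0.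
move/cvgr0Pnorm_lt : ha => /(_ _ e0) [N _ hN].
have it : forall k, `|a p| = `|a (iter k g p)| /\ (k <= iter k g p)%N.
  elim=> [|k [IH1 IH2]] //=; split; first by rewrite IH1 ag.
  exact: leq_ltn_trans IH2 (gp _).
have [h1 h2] := it N.
have := hN _ h2; rewrite /= -h1 ltxx //.
Qed.

Lemma shift_cvg (a : nat -> R) : a n @[n --> \oo] --> 0 -> a n.+1 @[n --> \oo] --> 0.
Proof. by move=> h; rewrite cvg_shiftS. Qed.

Lemma fourier_all0 (phi : R -> C) : Linfty phi -> selfadjoint_H2 (Vop phi) ->
  forall n, fourier phi n = 0.
Proof.
move=> hL sa.
have gp : forall p, (p < 4 * p + 1)%N by move=> p; lia.
have rp : forall p, fourier phi ((4 * p + 1)%N.+1)%:Z = (fourier phi (p.+1)%:Z)^*.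
  move=> p; rewrite (rel_pos p) // conjCK; congr (fourier phi (Posz _)); lia.
have pos : forall p : nat, fourier phi (p.+1)%:Z = 0.
  move=> p.
  have re0 := @chain0 (fun n => reC (fourier phi (n.+1)%:Z)) (fun p => (4 * p + 1)%N)
     (shift_cvg (fourier_re_cvg0 hL)) gp.
  have im0 := @chain0 (fun n => imC (fourier phi (n.+1)%:Z)) (fun p => (4 * p + 1)%N)
     (shift_cvg (fourier_im_cvg0 hL)) gp.
  have hr : reC (fourier phi (p.+1)%:Z) = 0.
    by apply: re0 => q; rewrite rp reC_conj.
  have hi : imC (fourier phi (p.+1)%:Z) = 0.
    by apply: im0 => q; rewrite rp imC_conj normrN.
  by move: hr hi; rewrite /reC /imC; case: (fourier phi _) => a b /= -> ->.
case=> [[|p]|p].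
- rewrite rel_zero //.
  by have := pos 8%N; rewrite /= => ->; rewrite conjC0.
- exact: pos.
- rewrite NegzE rel_neg //.
  have -> : (4 * p.+1)%N = (4 * p + 3).+1 by lia.
  by rewrite pos conjC0.
Qed.

End F.

Section G.
Variable R : realType.
Local Notation leb := (@lebesgue_measure R).
Local Notation D := (@circ R).
Local Notation Rint f := (Rintegral leb D f).

Inductive TP : (R -> R) -> Prop :=
| TPc (k : int) : TP (fun t => cos (k%:~R * t))
| TPs (k : int) : TP (fun t => sin (k%:~R * t))
| TPadd f g : TP f -> TP g -> TP (fun t => f t + g t)
| TPscal (c : R) f : TP f -> TP (fun t => c * f t).

Lemma TP_ext f g : TP f -> (forall t, f t = g t) -> TP g.
Proof. by move=> h e; have <- : f = g by apply/funext. Qed.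

Lemma TP_good f : TP f -> good f.
Proof.
elim=> {f} [k|k|f g _ gf _ gg|c f _ gf].
- exact: good_cos.
- exact: good_sin.
- exact: good_D.
- exact: good_Z.
Qed.

Lemma TP_int (u : R -> R) f : good u ->
  (forall k : int, Rint (fun t => u t * cos (k%:~R * t)) = 0) ->
  (forall k : int, Rint (fun t => u t * sin (k%:~R * t)) = 0) ->
  TP f -> Rint (fun t => u t * f t) = 0.
Proof.
move=> gu hc hs; elim=> {f} [k|k|f g tf IHf tg IHg|c f tf IHf].
- exact: hc.
- exact: hs.
- under eq_Rintegral do rewrite mulrDr.
  by rewrite RintD ?IHf ?IHg ?addr0 //; apply: good_M => //; exact: TP_good.
- under eq_Rintegral do rewrite mulrCA.
  by rewrite RintZ ?IHf ?mulr0 //; apply: good_M => //; exact: TP_good.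
Qed.

Lemma TP_cst (c : R) : TP (fun _ => c).
Proof.
apply: (TP_ext (TPscal c (TPc 0))) => t.
by rewrite mul0r cos0 mulr1.
Qed.

Lemma sin_cos_prod (a b : R) : sin a * cos b = 2^-1 * (sin (a - b) + sin (a + b)).
Proof. by rewrite sinD sinD cosN sinN; field. Qed.
Lemma cos_sin_prod (a b : R) : cos a * sin b = 2^-1 * (sin (a + b) - sin (a - b)).
Proof. by rewrite sinD sinD cosN sinN; field. Qed.

Lemma shiftk (k : int) (t : R) : k%:~R * t - t = (k - 1)%:~R * t.
Proof. by rewrite intrB mulrBl mul1r. Qed.
Lemma shiftk' (k : int) (t : R) : k%:~R * t + t = (k + 1)%:~R * t.
Proof. by rewrite intrD mulrDl mul1r. Qed.

Lemma TP_mulcos f : TP f -> TP (fun t => f t * cos t).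
Proof.
elim=> {f} [k|k|f g _ IHf _ IHg|c f _ IHf].
- apply: (TP_ext (TPscal 2^-1 (TPadd (TPc (k - 1)) (TPc (k + 1))))) => t.
  by rewrite cos_prod shiftk shiftk'.
- apply: (TP_ext (TPscal 2^-1 (TPadd (TPs (k - 1)) (TPs (k + 1))))) => t.
  by rewrite sin_cos_prod shiftk shiftk'.
- by apply: (TP_ext (TPadd IHf IHg)) => t; rewrite mulrDl.
- by apply: (TP_ext (TPscal c IHf)) => t; rewrite mulrA.
Qed.

Lemma TP_mulsin f : TP f -> TP (fun t => f t * sin t).
Proof.
elim=> {f} [k|k|f g _ IHf _ IHg|c f _ IHf].
- apply: (TP_ext (TPscal 2^-1 (TPadd (TPs (k + 1)) (TPscal (-1) (TPs (k - 1)))))) => t.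
  by rewrite cos_sin_prod shiftk shiftk' mulN1r.
- apply: (TP_ext (TPscal 2^-1 (TPadd (TPc (k - 1)) (TPscal (-1) (TPc (k + 1)))))) => t.
  by rewrite sin_prod shiftk shiftk' mulN1r.
- by apply: (TP_ext (TPadd IHf IHg)) => t; rewrite mulrDl.
- by apply: (TP_ext (TPscal c IHf)) => t; rewrite mulrA.
Qed.

Definition sfn (x0 : R) (t : R) := 2^-1 * (1 + cos (t - x0)).

Lemma TP_muls x0 f : TP f -> TP (fun t => f t * sfn x0 t).
Proof.
move=> tf.
apply: (TP_ext (TPadd (TPscal 2^-1 tf) (TPadd (TPscal (2^-1 * cos x0) (TP_mulcos tf))
   (TPscal (2^-1 * sin x0) (TP_mulsin tf))))) => t.
rewrite /sfn cosB; ring.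
Qed.

Lemma TP_poly x0 (p : {poly R}) : TP (fun t => p.[sfn x0 t]).
Proof.
elim/poly_ind: p => [|p c IH].
  by apply: (TP_ext (TP_cst 0)) => t; rewrite horner0.
apply: (TP_ext (TPadd (TP_muls x0 IH) (TP_cst c))) => t.
by rewrite hornerMXaddC.
Qed.

End G.

Section H.
Variable R : realType.

Lemma bern_le (x : R) (N : nat) : 0 <= x <= 1 -> 1 - N%:R * x <= (1 - x) ^+ N.
Proof.
move=> /andP[x0 x1]; elim: N => [|N IH]; first by rewrite mul0r subr0 expr0.
rewrite exprSr.
have y0 : 0 <= (1 - x) ^+ N by apply: exprn_ge0; rewrite subr_ge0.
have N0 : 0 <= N%:R :> R by [].
rewrite -natr1.
nra.
Qed.

Lemma bern_ge (x : R) (N : nat) : 0 <= x -> 1 + N%:R * x <= (1 + x) ^+ N.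
Proof.
move=> x0; elim: N => [|N IH]; first by rewrite mul0r addr0 expr0.
rewrite exprSr -natr1.
have N0 : 0 <= N%:R :> R by [].
nra.
Qed.

Definition Nk (s0 : R) (k : nat) : nat := Num.trunc ((s0^-1) ^+ k).
Definition Qv (s0 : R) (k : nat) (s : R) : R := 1 - (1 - s ^+ k) ^+ (Nk s0 k).
Definition Qpoly (s0 : R) (k : nat) : {poly R} := 1 - (1 - 'X^k) ^+ (Nk s0 k).

Lemma Qpoly_val s0 k s : (Qpoly s0 k).[s] = Qv s0 k s.
Proof. by rewrite /Qpoly /Qv !hornerE. Qed.

Lemma Q01 s0 k s : 0 <= s <= 1 -> 0 <= Qv s0 k s <= 1.
Proof.
move=> /andP[s0' s1].
have a0 : 0 <= 1 - s ^+ k by rewrite subr_ge0 exprn_ile1.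
have a1 : 1 - s ^+ k <= 1 by rewrite lerBlDr lerDl exprn_ge0.
have b0 : 0 <= (1 - s ^+ k) ^+ Nk s0 k by exact: exprn_ge0.
have b1 : (1 - s ^+ k) ^+ Nk s0 k <= 1 by exact: exprn_ile1.
by rewrite /Qv subr_ge0 b1 lerBlDr lerDl b0.
Qed.

Lemma Nk_le s0 k : 0 < s0 -> (Nk s0 k)%:R <= (s0^-1) ^+ k.
Proof. by move=> p0; rewrite /Nk truncn_le exprn_ge0 // invr_ge0 ltW. Qed.
Lemma Nk_gt s0 k : 0 < s0 -> (s0^-1) ^+ k - 1 < (Nk s0 k)%:R.
Proof. by move=> p0; rewrite /Nk ltrBlDr natr1 truncnS_gt. Qed.

Lemma Q_lo s0 s : 0 < s0 <= 1 -> 0 <= s < s0 -> Qv s0 k s @[k --> \oo] --> 0.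
Proof.
move=> /andP[p0 p1] /andP[sp ss0].
have s1 : s <= 1 by apply: ltW; exact: lt_le_trans ss0 p1.
apply: (@squeeze_cvgr _ _ _ _ (fun _ => 0) (fun k => (s / s0) ^+ k)).
- apply: nearW => k; apply/andP; split.
    by have /andP[] := Q01 s0 k (s:=s) (ltac:(by apply/andP; split)).
  have x01 : 0 <= s ^+ k <= 1 by rewrite exprn_ge0 // exprn_ile1.
  have hb := bern_le (Nk s0 k) x01.
  apply: (@le_trans _ _ ((Nk s0 k)%:R * s ^+ k)).
    by rewrite /Qv lerBlDr -lerBlDl.
  have -> : (s / s0) ^+ k = (s0^-1) ^+ k * s ^+ k by rewrite exprMn mulrC.
  by apply: ler_wpM2r; [exact: exprn_ge0 | exact: Nk_le].
- exact: cvg_cst.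
- apply: cvg_expr; rewrite ger0_norm; last by rewrite divr_ge0 // ltW.
  by rewrite ltr_pdivrMr // mul1r.
Qed.

Lemma Q_hi s0 s : 0 < s0 -> s0 < s <= 1 -> Qv s0 k s @[k --> \oo] --> (1 : R).
Proof.
move=> p0 /andP[ss0 s1].
have sp : 0 < s by exact: lt_trans ss0.
have -> : (fun k => Qv s0 k s) = (fun k => 1 - (1 - s ^+ k) ^+ (Nk s0 k)) by [].
rewrite -[X in _ --> X]subr0.
apply: cvgB; first exact: cvg_cst.
apply: (@squeeze_cvgr _ _ _ _ (fun _ => 0) (fun k => (s0 / s) ^+ k)).
- apply: nearW => k.
  set x := s ^+ k; set N := Nk s0 k.
  have x0 : 0 <= x by rewrite exprn_ge0 // ltW.
  have x1 : x <= 1 by rewrite exprn_ile1 // ltW.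
  have a0 : 0 <= 1 - x by rewrite subr_ge0.
  apply/andP; split; first exact: exprn_ge0.
  have h1 : (1 - x) ^+ N * (1 + N%:R * x) <= 1.
    apply: (@le_trans _ _ ((1 - x) ^+ N * (1 + x) ^+ N)).
      by apply: ler_wpM2l; [exact: exprn_ge0 | exact: bern_ge].
    rewrite -exprMn; apply: exprn_ile1.
      by rewrite mulr_ge0 // addr_ge0.
    by rewrite -subr_sqr expr1n lerBlDr lerDl sqr_ge0.
  have r0 : 0 < (s0^-1) ^+ k by rewrite exprn_gt0 // invr_gt0.
  have h2 : (s0^-1) ^+ k * x <= 1 + N%:R * x.
    have := Nk_gt k p0; rewrite -/N => hN.
    nra.
  have rx : (s0^-1) ^+ k * x = (s / s0) ^+ k by rewrite /x exprMn mulrC exprVn.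
  have q0 : 0 < (s / s0) ^+ k by rewrite exprn_gt0 // divr_gt0.
  have -> : (s0 / s) ^+ k = ((s / s0) ^+ k)^-1 by rewrite -exprVn invf_div.
  rewrite -rx -div1r ler_pdivlMr; last by rewrite rx.
  apply: le_trans h1; apply: ler_wpM2l; first exact: exprn_ge0.
  exact: h2.
- exact: cvg_cst.
- apply: cvg_expr; rewrite ger0_norm; last by rewrite divr_ge0 // ltW.
  by rewrite ltr_pdivrMr // mul1r.
Qed.

End H.

Section I.
Variable R : realType.
Local Notation leb := (@lebesgue_measure R).
Local Notation D := (@circ R).
Local Notation Rint f := (Rintegral leb D f).

Lemma cos_norm (y : R) : cos `|y| = cos y.
Proof. by case: (ger0P y) => h; rewrite ?cosN. Qed.

Lemma in0pi (x : R) : 0 <= x <= pi -> x \in `[0, pi].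
Proof. by move=> h; rewrite in_itv /=. Qed.

Lemma cos_arc (x0 d t : R) : 0 < d < pi -> d < x0 -> x0 + d < 2 * pi -> 0 <= t <= 2 * pi ->
  (`|t - x0| < d -> cos d < cos (t - x0)) /\ (d < `|t - x0| -> cos (t - x0) < cos d).
Proof.
move=> /andP[d0 dpi] dx0 x0d /andP[t0 t2].
have pi0 : 0 < pi :> R by exact: pi_gt0.
rewrite -(cos_norm (t - x0)); set y := `|t - x0|.
have y0 : 0 <= y by exact: normr_ge0.
have y2 : y < 2 * pi - d.
  rewrite /y; case: (ger0P (t - x0)) => _; lra.
split => h.
  by rewrite (ltr_cos (in0pi _) (in0pi _)) //; try (apply/andP; split); lra.
case: (lerP y pi) => ypi.
  by rewrite (ltr_cos (in0pi _) (in0pi _)) //; try (apply/andP; split); lra.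
have -> : cos y = cos (2 * pi - y).
  rewrite -[in RHS]cosN opprB.
  by have := @cosD2pi R (y - 2 * pi); rewrite -[pi *+ 2]mulr_natl subrK.
by rewrite (ltr_cos (in0pi _) (in0pi _)) //; try (apply/andP; split); lra.
Qed.

Lemma ae2 (a b : R) (P : R -> Prop) : (forall t, t != a -> t != b -> P t) ->
  {ae leb, forall t, P t}.
Proof.
move=> h; apply: (@negligibleS _ _ _ leb ([set a] `|` [set b]) (~` [set t | P t])).
  move=> t /= nP; apply: contra_notP nP => ab.
  apply: h; apply/eqP => e; apply: ab; [left|right]; exact: e.
apply: negligibleU; apply/negligibleP => //; exact: lebesgue_measure_set1.
Qed.

Lemma sfn01 (x0 t : R) : 0 <= sfn x0 t <= 1.
Proof.
rewrite /sfn; have := cos_max (t - x0); rewrite ler_norml => /andP[a b].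
apply/andP; split; lra.
Qed.

Lemma arc_int (u : R -> R) x0 d : good u ->
  (forall k : int, Rint (fun t => u t * cos (k%:~R * t)) = 0) ->
  (forall k : int, Rint (fun t => u t * sin (k%:~R * t)) = 0) ->
  0 < d < pi -> d < x0 -> x0 + d < 2 * pi ->
  Rintegral leb `]x0 - d, x0 + d[ u = 0.
Proof.
move=> gu hc hs hd dx0 x0d.
have /andP[d0 dpi] := hd.
have pi0 : 0 < pi :> R by exact: pi_gt0.
set I := `]x0 - d, x0 + d[.
have ID : [set` I] `<=` D.
  move=> t /=; rewrite in_itv /= => /andP[a b].
  rewrite /circ /= in_itv /=; apply/andP; split; lra.
have mI : measurable [set` I] by exact: measurable_itv.
rewrite -(setIidr ID) Rintegral_mkcondr.
set s0 := 2^-1 * (1 + cos d).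
have cd1 : cos d < 1.
  rewrite -cos0 (ltr_cos (in0pi _) (in0pi _)) //; apply/andP; split; lra.
have cdm1 : -1 < cos d.
  rewrite -cospi (ltr_cos (in0pi _) (in0pi _)) //; apply/andP; split; lra.
have s00 : 0 < s0 by rewrite /s0; lra.
have s01 : s0 < 1 by rewrite /s0; lra.
pose fk k t := u t * Qv s0 k (sfn x0 t).
have gfk : forall k, good (fk k).
  move=> k; apply: good_M => //.
  apply: TP_good; apply: (TP_ext (TP_poly x0 (Qpoly s0 k))) => t.
  exact: Qpoly_val.
have int0 : forall k, (\int[leb]_(x in D) (fk k x)%:E = 0)%E.
  move=> k.
  have h : Rint (fk k) = 0.
    rewrite -(TP_int gu hc hs (TP_poly x0 (Qpoly s0 k))).
    by apply: eq_Rintegral => t _; rewrite /fk Qpoly_val.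
  have fin : (\int[leb]_(x in D) (fk k x)%:E)%E \is a fin_num.
    by apply: integrable_fin_num; [exact: mD | exact: good_int].
  rewrite -(fineK fin).
  by move: h; rewrite /Rintegral => ->.
have mf : measurable_fun D (u \_ [set` I]).
  have mD' : measurable D by exact: mD.
  apply: (proj1 (measurable_restrict u mI mD')).
  have [mu _] := gu; apply: (measurable_funS mD' _ mu); exact: subIsetl.
have := @dominated_convergence _ _ _ leb D (@mD R) (fun k t => (fk k t)%:E)
  (fun t => ((u \_ [set` I]) t)%:E) (fun t => `|u t|%:E).
case.
- by move=> k; apply/measurable_EFinP; exact: (proj1 (gfk k)).
- exact/measurable_EFinP.
- apply: (@ae2 (x0 - d) (x0 + d)) => t ta tb Dt.
  apply: cvg_EFin; first exact: nearW.
  rewrite patchE.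
  have /andP[t0 t2] : 0 <= t <= 2 * pi by move: Dt; rewrite /circ /= in_itv.
  have [c1 c2] := cos_arc hd dx0 x0d (ltac:(by apply/andP; split) : 0 <= t <= 2 * pi).
  case: ifP => tI.
    rewrite -[X in _ --> X]mulr1; apply: cvgMr.
    apply: Q_hi => //; apply/andP; split; last by have /andP[] := sfn01 x0 t.
    have : `|t - x0| < d.
      by move: tI; rewrite inE /= in_itv /= => /andP[a b]; rewrite ltr_norml; apply/andP; split; lra.
    by move/c1; rewrite /s0 /sfn; lra.
  rewrite [X in _ --> X](_ : _ = u t * 0); last by rewrite mulr0.
  apply: cvgMr.
  apply: Q_lo; first by apply/andP; split => //; exact: ltW.
  apply/andP; split; first by have /andP[] := sfn01 x0 t.
  have : d < `|t - x0|.
    rewrite ltNge ler_norml; apply/negP => /andP[a b].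
    have a' : x0 - d < t by rewrite lt_neqAle; apply/andP; split; [rewrite eq_sym; exact: ta | lra].
    have b' : t < x0 + d by rewrite lt_neqAle; apply/andP; split; [exact: tb | lra].
    have tI' : t \in [set` I] by rewrite inE /= in_itv /= a' b'.
    by rewrite tI' in tI.
  by move/c2; rewrite /s0 /sfn; lra.
- exact: (integrable_norm (good_int gu)).
- apply: aeW => t k Dt /=; rewrite lee_fin /fk normrM.
  rewrite -[leRHS]mulr1; apply: ler_wpM2l => //.
  have /andP[a b] := Q01 s0 k (sfn01 x0 t).
  by rewrite ger0_norm.
move=> _ _.
have -> : (fun n => \int[leb]_(x in D) (fk n x)%:E)%E = (fun=> 0%E).
  by apply/funext => n; exact: int0.
move=> h0.
have : (\int[leb]_(x in D) ((u \_ [set` I]) x)%:E = 0)%E.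
  apply: (cvg_unique _ h0); first exact: ereal_hausdorff.
  exact: cvg_cst.
by rewrite /Rintegral => ->.
Qed.

End I.

Section J.
Variable R : realType.
Local Notation leb := (@lebesgue_measure R).
Local Notation D := (@circ R).
Local Notation Rint f := (Rintegral leb D f).

Lemma int_ab (u : R -> R) a b : good u ->
  (forall k : int, Rint (fun t => u t * cos (k%:~R * t)) = 0) ->
  (forall k : int, Rint (fun t => u t * sin (k%:~R * t)) = 0) ->
  0 < a -> a < b -> b < 2 * pi ->
  Rintegral leb `]a, b[ u = 0.
Proof.
move=> gu hc hs a0 ab b2.
have pi0 : 0 < pi :> R by exact: pi_gt0.
have := @arc_int _ u ((a + b) / 2) ((b - a) / 2) gu hc hs.
have -> : (a + b) / 2 - (b - a) / 2 = a by field.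
have -> : (a + b) / 2 + (b - a) / 2 = b by field.
apply; first (apply/andP; split); lra.
Qed.

Lemma uniq_real (u : R -> R) : good u ->
  (forall k : int, Rint (fun t => u t * cos (k%:~R * t)) = 0) ->
  (forall k : int, Rint (fun t => u t * sin (k%:~R * t)) = 0) ->
  {ae leb, forall t, D t -> u t = 0}.
Proof.
move=> gu hc hs.
have pi0 : 0 < pi :> R by exact: pi_gt0.

set f := u \_ D.
have iT : leb.-integrable setT (EFin \o f).
  rewrite /f -restrict_EFin; apply: (proj1 (@integrable_mkcond _ _ _ leb D (EFin \o u) _)); first exact: mD.
  exact: good_int.
have iI : forall A, measurable A -> leb.-integrable A (EFin \o f).
  move=> A mA; exact: integrableS iT.
have loc : locally_integrable [set: R] f.
  by apply: integrable_locally; [exact: mD | exact: good_int].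
set F := fun x => Rintegral leb [set` Interval (BLeft 0) (BRight x)] f.
have flat : forall a b, 0 < a -> a < b -> b < 2 * pi -> F b = F a.
  move=> a b a0 ab b2; apply/eqP; rewrite -subr_eq0; apply/eqP.
  rewrite /F Rintegral_itvB; last 3 first.
  - apply: iI; exact: measurable_itv.
  - by rewrite bnd_simp ltW.
  - by rewrite bnd_simp ltW.
  rewrite -Rintegral_itv_bndo_bndc; last by apply: iI; exact: measurable_itv.
  rewrite -(int_ab gu hc hs a0 ab b2).
  apply: eq_Rintegral => t; rewrite inE /= in_itv /= => /andP[ta tb].
  have Dt : D t by rewrite /circ /= in_itv /=; apply/andP; split; lra.
  by rewrite mem_set.
have flat2 : forall x y, 0 < x < 2 * pi -> 0 < y < 2 * pi -> F y = F x.
  move=> x y /andP[x0 x2] /andP[y0 y2].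
  case: (ltgtP x y) => [xy|yx|->] //.
  - exact: flat.
  - by apply/esym; exact: flat.
have der0 : forall x, 0 < x < 2 * pi -> F^`()%classic x = 0.
  move=> x hx.
  rewrite derive1E (@near_eq_derive _ _ _ F (cst (F x))).
    by rewrite -derive1E derive1_cst.
  have hx' : x \in `]0, 2 * pi[ by rewrite in_itv.
  near=> y.
  have : y \in `]0, 2 * pi[ by near: y; exact: near_in_itvoo.
  by rewrite in_itv /= => hy; exact: flat2.
have iI' : forall y, leb.-integrable [set` Interval (BLeft 0) (BRight y)] (EFin \o f).
  by move=> y; apply: iI; exact: measurable_itv.
have := FTC1 iI' loc; move=> /= hF.
have h2 : {ae leb, forall t : R, t != 0 /\ t != 2 * pi}.
  by apply: (@ae2 R 0 (2 * pi)) => t a b; split.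
apply: (aeS2 _ hF h2) => t H [t0 t2] Dt.
have /andP[a b] : 0 <= t <= 2 * pi by move: Dt; rewrite /circ /= in_itv.
have tp : 0 < t by rewrite lt_neqAle eq_sym t0.
have t2' : t < 2 * pi by rewrite lt_neqAle t2.
have [_ dF] := H (ltac:(by rewrite ?bnd_simp ?lte_fin)).
rewrite der0 in dF; last by apply/andP.
by move: dF; rewrite /f patchE mem_set.
Unshelve. all: by end_near.
Qed.

End J.

Section K.
Variable R : realType.
Local Notation C := R[i].
Local Notation leb := (@lebesgue_measure R).
Local Notation D := (@circ R).
Local Notation Rint f := (Rintegral leb D f).

Lemma Rint_cosN (w : R -> R) (k : int) :
  Rint (fun t => w t * cos ((- k)%:~R * t)) = Rint (fun t => w t * cos (k%:~R * t)).
Proof. by apply: eq_Rintegral => t _; rewrite intrN mulNr cosN. Qed.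

Lemma Rint_sinN (w : R -> R) (k : int) : good w ->
  Rint (fun t => w t * sin ((- k)%:~R * t)) = - Rint (fun t => w t * sin (k%:~R * t)).
Proof.
move=> gw.
rewrite -[RHS]mulN1r -RintZ; last by apply: good_M => //; exact: good_sin.
by apply: eq_Rintegral => t _; rewrite intrN mulNr sinN; ring.
Qed.

Lemma coefs0 (phi : R -> C) : Linfty phi -> (forall n, fourier phi n = 0) ->
  forall k : int,
  [/\ Rint (fun t => reC (phi t) * cos (k%:~R * t)) = 0,
      Rint (fun t => reC (phi t) * sin (k%:~R * t)) = 0,
      Rint (fun t => imC (phi t) * cos (k%:~R * t)) = 0 &
      Rint (fun t => imC (phi t) * sin (k%:~R * t)) = 0].
Proof.
move=> hL h0 k; have [gu gv] := Linfty_good hL.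
have pi0 : 0 < pi :> R by exact: pi_gt0.
have i0 : (2 * pi)^-1 != 0 :> R by rewrite invr_eq0 mulf_neq0 // gt_eqF.
have r1 := fourier_re k hL; rewrite h0 /= in r1.
have r2 := fourier_re (- k) hL; rewrite h0 /= Rint_cosN Rint_sinN // in r2.
have m1 := fourier_im k hL; rewrite h0 /= in m1.
have m2 := fourier_im (- k) hL; rewrite h0 /= Rint_cosN Rint_sinN // in m2.
move: r1 r2 m1 m2.
set A := Rint (fun t => reC (phi t) * cos (k%:~R * t)).
set B := Rint (fun t => reC (phi t) * sin (k%:~R * t)).
set A' := Rint (fun t => imC (phi t) * cos (k%:~R * t)).
set B' := Rint (fun t => imC (phi t) * sin (k%:~R * t)).
move=> /esym/eqP; rewrite mulf_eq0 (negbTE i0) /= => /eqP r1.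
move=> /esym/eqP; rewrite mulf_eq0 (negbTE i0) /= => /eqP r2.
move=> /esym/eqP; rewrite mulf_eq0 (negbTE i0) /= => /eqP m1.
move=> /esym/eqP; rewrite mulf_eq0 (negbTE i0) /= => /eqP m2.
split; lra.
Qed.

Lemma hard_dir (phi : R -> C) : Linfty phi -> selfadjoint_H2 (Vop phi) -> ae_zero phi.
Proof.
move=> hL sa.
have h0 := fourier_all0 hL sa.
have [gu gv] := Linfty_good hL.
have hu := uniq_real gu (fun k => let: And4 a _ _ _ := coefs0 hL h0 k in a)
                        (fun k => let: And4 _ b _ _ := coefs0 hL h0 k in b).
have hv := uniq_real gv (fun k => let: And4 _ _ c _ := coefs0 hL h0 k in c)
                        (fun k => let: And4 _ _ _ d := coefs0 hL h0 k in d).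
apply: (aeS2 _ hu hv) => t a b Dt.
move: (a Dt) (b Dt); rewrite /reC /imC; case: (phi t) => x y /= -> ->.
done.
Qed.

Lemma easy_dir (phi : R -> C) : Linfty phi -> ae_zero phi -> selfadjoint_H2 (Vop phi).
Proof.
move=> hL hz.
have [[mu _] [mv _]] := Linfty_good hL.
have h0 : forall n, fourier phi n = 0.
  move=> n; rewrite /fourier.
  rewrite !Rint_ae0.
  - by rewrite !mulr0.
  - apply: measurable_funB; apply: measurable_funM => //;
      apply: (proj1 (good_sin _)) || apply: (proj1 (good_cos _)).
  - by apply: aeS hz => t h Dt; rewrite (h Dt) /= mul0r mul0r subrr.
  - apply: measurable_funD; apply: measurable_funM => //;
      apply: (proj1 (good_sin _)) || apply: (proj1 (good_cos _)).
  - by apply: aeS hz => t h Dt; rewrite (h Dt) /= mul0r mul0r addr0.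
have V0 : forall c, Vop phi c = fun _ => 0.
  move=> c; apply/funext => m; rewrite /Vop /Wop /Pproj /Mult.
  case: ifP => // _.
  under eq_fun do rewrite h0 mul0r.
  exact: sumZ0.
move=> f g _ _; rewrite !V0 /inner.
under eq_fun do rewrite mul0r.
rewrite sumZ0.
under eq_fun do rewrite conjc0 mulr0.
by rewrite sumZ0.
Qed.

End K.

Theorem mainTheorem11 (R : realType) (phi : R -> R[i]) :
  Linfty phi -> (selfadjoint_H2 (Vop phi) <-> ae_zero phi).
Proof. by move=> hL; split; [exact: hard_dir | exact: easy_dir]. Qed.
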